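(* Under the hypotheses of Theorem 3.1 (namely: $\phi\in\Phi$, $f:\mathbb{R}^n\to(-\infty,+\infty]$ proper lsc, $\Omega\subseteq\mathbb{R}^n$ closed, $\delta\ge0$, $p\in[1,\infty]$, $\mathcal{J}=\{J_1,\dots,J_m\}$ a partition of $\{1,\dots,n\}$, the problem $\min_x\{\|G_{\mathcal{J},p}(x)\|_0: f(x)\le\delta,x\in\Omega\}$ has a nonempty global optimal solution set with nonzero optimal value $s^*$, and there is $\alpha>0$ with $\pi_{s^*}(G_{\mathcal{J},p}(x))\ge\alpha$ for all $x\in\Omega$ with $f(x)\le\delta$), for every $\varrho>\phi'_-(1)/\alpha$ the problem $\min_x\{\|G_{\mathcal{J},p}(x)\|_0: f(x)\le\delta,x\in\Omega\}$ has the same set of global optimal solutions as $$\textstyle\min_{x\in\mathbb{R}^n}\Big\{\varrho\sum_{i=1}^m\|x_{J_i}\|_p-\sum_{i=1}^m\psi^*(\varrho\|x_{J_i}\|_p):\ f(x)\le\delta,\ x\in\Omega\Big\}.$$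
   Context: $\Phi$ is the family of proper lsc functions $\phi:\mathbb{R}\to(-\infty,+\infty]$ with $\mathrm{int}(\mathrm{dom}\,\phi)\supseteq[0,1]$, convex on $[0,1]$, such that $\min_{t\in[0,1]}\phi(t)=0$ is attained at a (fixed) point $t^*\in[0,1)$, and $\phi(1)=1$; $\phi'_-(1)$ is the left derivative at $1$. $\psi(t)=\phi(t)$ for $t\in[0,1]$ and $\psi(t)=+\infty$ otherwise; $\psi^*(s)=\sup_{t\in\mathbb{R}}\{st-\psi(t)\}$. $G_{\mathcal{J},p}(x):=(\|x_{J_1}\|_p,\dots,\|x_{J_m}\|_p)^T$; $\|v\|_0$ counts nonzero entries; $\pi_i(v)$ is the $i$-th largest entry of $|v|$. *)

(* Defs.v *)
From mathcomp Require Import all_boot.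
From Stdlib Require Import Reals ClassicalEpsilon.

Set Implicit Arguments.
Unset Strict Implicit.

Inductive ereal := Fin (r : R) | PInf.

Definition er_val (e : ereal) : R := match e with Fin r => r | PInf => 0%R end.
Definition er_lt (c : R) (e : ereal) : Prop :=
  match e with Fin r => (c < r)%R | PInf => True end.
Definition er_le (e : ereal) (c : R) : Prop :=
  match e with Fin r => (r <= c)%R | PInf => False end.
Definition er_finite (e : ereal) : Prop := exists r, e = Fin r.

(* R^n as functions on {0,...,n-1}; sup-norm distance (same topology as Euclidean). *)
Definition vec (n : nat) := 'I_n -> R.
Definition vdist (n : nat) (x y : vec n) : R :=
  \big[Rmax/0%R]_(i : 'I_n) Rabs (x i - y i).

Definition proper_fn (X : Type) (g : X -> ereal) : Prop := exists x, er_finite (g x).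
Definition lsc_vec (n : nat) (g : vec n -> ereal) : Prop :=
  forall x (c : R), er_lt c (g x) ->
    exists d, (0 < d)%R /\ forall y, (vdist x y < d)%R -> er_lt c (g y).
Definition lsc_R (g : R -> ereal) : Prop :=
  forall x (c : R), er_lt c (g x) ->
    exists d, (0 < d)%R /\ forall y, (Rabs (y - x) < d)%R -> er_lt c (g y).
Definition closed_vec (n : nat) (Om : vec n -> Prop) : Prop :=
  forall x, (forall eps, (0 < eps)%R -> exists y, Om y /\ (vdist x y < eps)%R) -> Om x.

Definition in_Phi (phi : R -> ereal) (tstar : R) : Prop :=
  proper_fn phi /\ lsc_R phi /\
  (* int(dom phi) contains [0,1] *)
  (forall t, (0 <= t <= 1)%R -> exists e, (0 < e)%R /\
      forall u, (Rabs (u - t) < e)%R -> er_finite (phi u)) /\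
  (forall t1 t2 l, (0 <= t1 <= 1)%R -> (0 <= t2 <= 1)%R -> (0 <= l <= 1)%R ->
      (er_val (phi (l * t1 + (1 - l) * t2)) <=
       l * er_val (phi t1) + (1 - l) * er_val (phi t2))%R) /\
  (0 <= tstar < 1)%R /\ phi tstar = Fin 0 /\
  (forall t, (0 <= t <= 1)%R -> (0 <= er_val (phi t))%R) /\
  phi 1%R = Fin 1.

Definition left_deriv_at1 (phi : R -> ereal) (d : R) : Prop :=
  forall eps, (0 < eps)%R -> exists eta, (0 < eta)%R /\
    forall t, (1 - eta < t < 1)%R ->
      (Rabs ((er_val (phi t) - er_val (phi 1%R)) / (t - 1) - d) < eps)%R.

Definition Rsup (E : R -> Prop) : R := epsilon (inhabits 0%R) (fun v => is_lub E v).

Definition psi (phi : R -> ereal) (t : R) : ereal :=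
  match Rle_dec 0 t, Rle_dec t 1 with left _, left _ => phi t | _, _ => PInf end.
Definition psi_star (phi : R -> ereal) (s : R) : R :=
  Rsup (fun y => exists t r, psi phi t = Fin r /\ y = (s * t - r)%R).

Inductive pexp := PFin (p : R) | PInfty.
Definition valid_p (p : pexp) : Prop :=
  match p with PFin q => (1 <= q)%R | PInfty => True end.

Definition rpow (a b : R) : R := if Rlt_dec 0 a then Rpower a b else 0%R.

Definition is_partition (n m : nat) (J : 'I_m -> {set 'I_n}) : Prop :=
  (forall k, exists i, i \in J k) /\
  (forall k l i, k <> l -> i \in J k -> i \in J l -> False) /\
  (forall i, exists k, i \in J k).

Definition block_norm (n m : nat) (J : 'I_m -> {set 'I_n}) (p : pexp)
  (x : vec n) (k : 'I_m) : R :=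
  match p with
  | PFin q => rpow (\big[Rplus/0%R]_(i : 'I_n | i \in J k) rpow (Rabs (x i)) q) (/ q)
  | PInfty => \big[Rmax/0%R]_(i : 'I_n | i \in J k) Rabs (x i)
  end.

Definition G (n m : nat) (J : 'I_m -> {set 'I_n}) (p : pexp) (x : vec n) : 'I_m -> R :=
  fun k => block_norm J p x k.

Definition l0 (m : nat) (v : 'I_m -> R) : nat :=
  \sum_(k : 'I_m) (if Req_EM_T (v k) 0%R then 0 else 1)%N.

(* pi_i(v): the i-th largest entry of |v| (i >= 1) *)
Definition Rgeb (a b : R) : bool := if Rle_dec b a then true else false.
Definition pi_i (m : nat) (i : nat) (v : 'I_m -> R) : R :=
  nth 0%R (sort Rgeb [seq Rabs (v k) | k <- enum 'I_m]) i.-1.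

Definition feasible (n : nat) (f : vec n -> ereal) (Om : vec n -> Prop) (delta : R)
  (x : vec n) : Prop := Om x /\ er_le (f x) delta.

Definition opt_l0 (n m : nat) (J : 'I_m -> {set 'I_n}) (p : pexp)
  (f : vec n -> ereal) (Om : vec n -> Prop) (delta : R) (x : vec n) : Prop :=
  feasible f Om delta x /\
  forall y, feasible f Om delta y -> (l0 (G J p x) <= l0 (G J p y))%N.

Definition surrogate_obj (n m : nat) (J : 'I_m -> {set 'I_n}) (p : pexp)
  (phi : R -> ereal) (rho : R) (x : vec n) : R :=
  (rho * (\big[Rplus/0%R]_(k : 'I_m) G J p x k)
   - \big[Rplus/0%R]_(k : 'I_m) psi_star phi (rho * G J p x k))%R.

Definition opt_surrogate (n m : nat) (J : 'I_m -> {set 'I_n}) (p : pexp)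
  (phi : R -> ereal) (rho : R)
  (f : vec n -> ereal) (Om : vec n -> Prop) (delta : R) (x : vec n) : Prop :=
  feasible f Om delta x /\
  forall y, feasible f Om delta y ->
    (surrogate_obj J p phi rho x <= surrogate_obj J p phi rho y)%R.

(* Main.v *)
Require Import Defs.
From mathcomp Require Import all_boot.
From Stdlib Require Import Reals Lra ClassicalEpsilon Classical.
Open Scope R_scope.
Set Implicit Arguments.
Unset Strict Implicit.

Lemma phi_conv_mono phi ts t u : in_Phi phi ts -> 0 <= t -> t < u -> u < 1 ->
  (1 - er_val (phi t)) / (1 - t) <= (1 - er_val (phi u)) / (1 - u).
Proof.
move=> [_ [_ [_ [Hc [_ [_ [_ H1]]]]]]] Ht Htu Hu1.
set l := (1 - u) / (1 - t).
have Hlt : l * (1 - t) = 1 - u by rewrite /l; field; lra.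
have Hl0 : 0 <= l <= 1 by split; nra.
have := Hc t 1 l ltac:(lra) ltac:(lra) Hl0.
have -> : l * t + (1 - l) * 1 = u by lra.
rewrite H1 /= => Hc'.
have Hlu : (1 - er_val (phi u)) >= l * (1 - er_val (phi t)) by lra.
apply (Rmult_le_reg_r (1 - u)); first lra.
have -> : (1 - er_val (phi u)) / (1 - u) * (1 - u) = 1 - er_val (phi u) by field; lra.
have -> : (1 - er_val (phi t)) / (1 - t) * (1 - u) = l * (1 - er_val (phi t)) by rewrite /l; field; lra.
lra.
Qed.

Lemma support_line phi ts d : in_Phi phi ts -> left_deriv_at1 phi d ->
  forall t, 0 <= t <= 1 -> 1 + d * (t - 1) <= er_val (phi t).
Proof.
move=> Hphi Hd t Ht.
have H1 : phi 1 = Fin 1 by case: Hphi => [_ [_ [_ [_ [_ [_ [_ H]]]]]]].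
case: (Req_dec t 1) => [-> | Ht1]; first by rewrite H1 /=; lra.
apply: Rnot_lt_le => Hlt.
set q := (1 - er_val (phi t)) / (1 - t).
have Hqt : q * (1 - t) = 1 - er_val (phi t) by rewrite /q; field; lra.
have Hqd : d < q by nra.
have [eta [Heta He]] := Hd (q - d) ltac:(lra).
set u := (Rmax t (1 - eta) + 1) / 2.
have Hm1 := Rmax_l t (1 - eta). have Hm2 := Rmax_r t (1 - eta).
have Hmx : Rmax t (1 - eta) < 1 by apply Rmax_lub_lt; lra.
have := He u ltac:(rewrite /u; lra).
have := @phi_conv_mono phi ts t u Hphi (proj1 Ht) (ltac:(rewrite /u; lra) : t < u) ltac:(rewrite /u; lra).
rewrite -/q H1 /=.
have -> : (er_val (phi u) - 1) / (u - 1) = (1 - er_val (phi u)) / (1 - u) by field; rewrite /u; lra.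
move=> Hm Ha.
have := Rabs_def2 _ _ Ha. lra.
Qed.
Lemma psi_fin phi t r : psi phi t = Fin r -> (0 <= t <= 1) /\ phi t = Fin r.
Proof.
rewrite /psi; case: (Rle_dec 0 t) => [a|a]; case: (Rle_dec t 1) => [b|b] //; by [].
Qed.

Lemma phi_fin_on phi ts t : in_Phi phi ts -> 0 <= t <= 1 -> phi t = Fin (er_val (phi t)).
Proof.
move=> [_ [_ [Hd _]]] Ht. have [e [He H]] := Hd t Ht.
have [r Hr] := H t ltac:(rewrite Rminus_diag Rabs_R0; lra). by rewrite Hr.
Qed.

Lemma psi_on phi t : 0 <= t <= 1 -> psi phi t = phi t.
Proof.
move=> Ht; rewrite /psi; case: (Rle_dec 0 t) => [a|a]; case: (Rle_dec t 1) => [b|b] //; lra.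
Qed.

Lemma psi_star_lub phi ts s : in_Phi phi ts ->
  is_lub (fun y => exists t r, psi phi t = Fin r /\ y = s * t - r) (psi_star phi s).
Proof.
move=> Hphi.
have Hnn : forall t, 0 <= t <= 1 -> 0 <= er_val (phi t).
  by case: Hphi => [_ [_ [_ [_ [_ [_ [H _]]]]]]].
rewrite /psi_star /Rsup; apply: epsilon_spec.
have Hb : bound (fun y => exists t r, psi phi t = Fin r /\ y = s * t - r).
  exists (Rabs s); move=> y [t [r [Hp ->]]].
  have [Ht Hr] := psi_fin Hp. have := Hnn t Ht. rewrite Hr /= => Hr0.
  have := Rle_abs s. have := Rle_abs (- s). rewrite Rabs_Ropp. nra.
have He : exists y, (fun y => exists t r, psi phi t = Fin r /\ y = s * t - r) y.
  exists (s * 1 - 1), 1, 1. split => //.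
  rewrite psi_on; last lra. by case: Hphi => [_ [_ [_ [_ [_ [_ [_ H]]]]]]].
have [m Hm] := completeness _ Hb He. by exists m.
Qed.

Lemma pstar_ub phi ts s b : in_Phi phi ts ->
  (forall t, 0 <= t <= 1 -> s * t - er_val (phi t) <= b) -> psi_star phi s <= b.
Proof.
move=> Hphi H. apply (proj2 (psi_star_lub s Hphi)) => y [t [r [Hp ->]]].
have [Ht Hr] := psi_fin Hp. have := H t Ht. by rewrite Hr.
Qed.

Lemma pstar_lb phi ts s t : in_Phi phi ts -> 0 <= t <= 1 ->
  s * t - er_val (phi t) <= psi_star phi s.
Proof.
move=> Hphi Ht. apply (proj1 (psi_star_lub s Hphi)).
exists t, (er_val (phi t)); split => //. rewrite psi_on //. exact: phi_fin_on Hphi Ht.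
Qed.

Section H.
Variables (phi : R -> ereal) (ts d : R).
Hypothesis Hphi : in_Phi phi ts.
Hypothesis Hd : left_deriv_at1 phi d.

Let Hnn : forall t, 0 <= t <= 1 -> 0 <= er_val (phi t).
Proof. by case: Hphi => [_ [_ [_ [_ [_ [_ [H _]]]]]]]. Qed.
Let H1 : phi 1 = Fin 1.
Proof. by case: Hphi => [_ [_ [_ [_ [_ [_ [_ H]]]]]]]. Qed.
Let Hts : 0 <= ts < 1 /\ phi ts = Fin 0.
Proof. by case: Hphi => [_ [_ [_ [_ [H [H' _]]]]]]. Qed.

Lemma d_pos : 0 < d.
Proof.
have [[Ht0 Ht1] Hp] := Hts.
have := support_line Hphi Hd (conj Ht0 (Rlt_le _ _ Ht1)). rewrite Hp /=. nra.
Qed.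

Lemma ps0 : psi_star phi 0 = 0.
Proof.
apply Rle_antisym.
- apply: pstar_ub Hphi _ => t Ht. have := Hnn Ht. lra.
- have [[Ht0 Ht1] Hp] := Hts.
  have := pstar_lb 0 Hphi (conj Ht0 (Rlt_le _ _ Ht1)). rewrite Hp /=. lra.
Qed.

Lemma ps_le s : 0 <= s -> psi_star phi s <= s.
Proof. move=> Hs. apply: pstar_ub Hphi _ => t Ht. have := Hnn Ht. nra. Qed.

Lemma ps_ge s : s - 1 <= psi_star phi s.
Proof. have := pstar_lb s Hphi (conj Rle_0_1 (Rle_refl 1)). rewrite H1 /=. lra. Qed.

Lemma ps_big s : d <= s -> psi_star phi s <= s - 1.
Proof.
move=> Hs. apply: pstar_ub Hphi _ => t Ht.
have := support_line Hphi Hd Ht. nra.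
Qed.

Lemma ps_pos s : 0 < s -> psi_star phi s < s.
Proof.
move=> Hs. have Hd0 := d_pos.
set e := Rmin (1/2) (s / (2 * d)).
have He : 0 < e.
  apply Rmin_glb_lt; first lra.
  apply Rdiv_lt_0_compat; lra.
have He1 := Rmin_l (1/2) (s / (2 * d)).
have He2 := Rmin_r (1/2) (s / (2 * d)).
have Hsd : s / (2 * d) * (2 * d) = s by field; lra.
suff : psi_star phi s <= s - e by lra.
apply: pstar_ub Hphi _ => t Ht.
have Hs1 := support_line Hphi Hd Ht. have Hs2 := Hnn Ht.
rewrite -/e in He1 He2.
case: (Rle_lt_dec (d * (1 - t)) (1/2)) => Hc.
- nra.
- have Hu : 1 / (2 * d) < 1 - t.
    apply (Rmult_lt_reg_l (2 * d)); first lra.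
    have -> : 2 * d * (1 / (2 * d)) = 1 by field; lra. lra.
  have : s / (2 * d) < s * (1 - t).
    have -> : s / (2 * d) = s * (1 / (2 * d)) by field; lra.
    nra.
  nra.
Qed.
End H.
Lemma obj_sum (I : Type) (r : seq I) rho (g w : I -> R) :
  rho * \big[Rplus/0]_(k <- r) g k - \big[Rplus/0]_(k <- r) w k =
  \big[Rplus/0]_(k <- r) (rho * g k - w k).
Proof.
elim: r => [|x r IH]; first by rewrite !big_nil; ring.
rewrite !big_cons -IH; ring.
Qed.

Lemma INR_addn (a b : nat) : INR (a + b)%nat = INR a + INR b.
Proof. by rewrite -plusE plus_INR. Qed.

Lemma sum_le_nat (I : Type) (r : seq I) (h : I -> R) (c : I -> nat) :
  (forall k, h k <= INR (c k)) ->
  \big[Rplus/0]_(k <- r) h k <= INR (\sum_(k <- r) c k)%nat.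
Proof.
move=> H; elim: r => [|x r IH]; first by rewrite !big_nil /=; lra.
rewrite !big_cons INR_addn. have := H x. lra.
Qed.

Lemma sum_ge_nat (I : Type) (r : seq I) (h : I -> R) (c : I -> nat) :
  (forall k, INR (c k) <= h k) ->
  INR (\sum_(k <- r) c k)%nat <= \big[Rplus/0]_(k <- r) h k.
Proof.
move=> H; elim: r => [|x r IH]; first by rewrite !big_nil /=; lra.
rewrite !big_cons INR_addn. have := H x. lra.
Qed.

Lemma sum_gt_nat (I : eqType) (r : seq I) (h : I -> R) (c : I -> nat) k0 :
  (forall k, INR (c k) <= h k) -> k0 \in r -> INR (c k0) < h k0 ->
  INR (\sum_(k <- r) c k)%nat < \big[Rplus/0]_(k <- r) h k.
Proof.
move=> H; elim: r => [|x r IH] //.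
rewrite in_cons => /orP [/eqP -> | Hin] Hlt; rewrite !big_cons INR_addn.
- have := sum_ge_nat r H. lra.
- have := IH Hin Hlt. have := H x. lra.
Qed.

Lemma sum_ind_count (I : Type) (r : seq I) (b : pred I) :
  (\sum_(k <- r) (if b k then 1 else 0))%nat = count b r.
Proof.
elim: r => [|x r IH]; first by rewrite big_nil.
by rewrite big_cons IH /=; case: (b x).
Qed.

Lemma RgebP a b : Rgeb a b = true <-> b <= a.
Proof. rewrite /Rgeb; case: (Rle_dec b a) => H; split => // H'; exfalso; auto. Qed.

Lemma Rgeb_tr : transitive Rgeb.
Proof. move=> y x z /RgebP H1 /RgebP H2; apply/RgebP; lra. Qed.

Lemma Rgeb_total : total Rgeb.
Proof.
move=> x y; case: (Rle_dec y x) => H.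
- have -> : Rgeb x y by apply/RgebP.
  done.
- have -> : Rgeb y x by (apply/RgebP; lra).
  by rewrite orbT.
Qed.

Lemma count_pi (m s : nat) (v : 'I_m -> R) alpha : 0 < alpha -> s <> 0%nat ->
  alpha <= pi_i s v -> (s <= count (fun k => Rgeb (Rabs (v k)) alpha) (enum 'I_m))%nat.
Proof.
move=> Ha Hs; rewrite /pi_i.
set sl := sort Rgeb _.
have Hcnt : count (fun y => Rgeb y alpha) sl = count (fun k => Rgeb (Rabs (v k)) alpha) (enum 'I_m).
  rewrite /sl sort_map count_map.
  have Hp : perm_eq (sort (relpre (fun k => Rabs (v k)) Rgeb) (enum 'I_m)) (enum 'I_m).
    by rewrite perm_sort perm_refl.
  by rewrite (permP Hp).
rewrite -Hcnt => Hn.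
have Hsrt : sorted Rgeb sl by apply: sort_sorted; exact: Rgeb_total.
have Hi0 : (s.-1 < size sl)%nat.
  rewrite ltnNge; apply/negP => Hle. move: Hn; rewrite nth_default //. lra.
have Hs0 : (0 < s)%nat by rewrite lt0n; apply/eqP.
have Hss : (s <= size sl)%nat by rewrite -(prednK Hs0).
have Hall : all (fun y => Rgeb y alpha) (take s sl).
  apply/(all_nthP 0) => i; rewrite size_takel // => Hi.
  rewrite nth_take //.
  have : (i <= s.-1)%nat by rewrite -ltnS prednK.
  rewrite leq_eqVlt => /orP [/eqP -> | Hlt]; first by apply/RgebP.
  apply: (Rgeb_tr (y := nth 0 sl s.-1)); last by apply/RgebP.
  apply: (sorted_ltn_nth Rgeb_tr 0 Hsrt) => //.
  by rewrite inE; apply: leq_ltn_trans Hi0; apply: ltnW.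
move: Hall; rewrite all_count => /eqP Hc.
rewrite -(cat_take_drop s sl) count_cat Hc size_takel //.
exact: leq_addr.
Qed.

Lemma G_nonneg (n m : nat) (J : 'I_m -> {set 'I_n}) p x k : 0 <= G J p x k.
Proof.
rewrite /G /block_norm; case: p => [q|].
- rewrite /rpow; destruct (Rlt_dec _ _); [left; unfold Rpower; apply exp_pos | right; reflexivity].
- apply: (big_ind (fun y => 0 <= y)); first lra.
  + move=> a b Ha _; have := Rmax_l a b; lra.
  + move=> i _; exact: Rabs_pos.
Qed.

Close Scope R_scope.
Unset Implicit Arguments.
Set Strict Implicit.

Theorem corollary3p1
  (phi : R -> ereal) (tstar : R) (n m : nat)
  (f : vec n -> ereal) (Om : vec n -> Prop) (delta : R) (p : pexp)
  (J : 'I_m -> {set 'I_n}) (sstar : nat) (alpha : R) (dphi : R)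
  (Hphi : in_Phi phi tstar)
  (Hf_proper : proper_fn f) (Hf_lsc : lsc_vec f)
  (HOm : closed_vec Om) (Hdelta : (0 <= delta)%R) (Hp : valid_p p)
  (HJ : is_partition J)
  (Hsstar : exists x0, opt_l0 J p f Om delta x0 /\ l0 (G J p x0) = sstar)
  (Hsstar0 : sstar <> 0%N)
  (Halpha : (0 < alpha)%R)
  (Hpi : forall x, feasible f Om delta x -> (alpha <= pi_i sstar (G J p x))%R)
  (Hdphi : left_deriv_at1 phi dphi) :
  forall rho : R, (dphi / alpha < rho)%R ->
    forall x : vec n,
      opt_l0 J p f Om delta x <-> opt_surrogate J p phi rho f Om delta x.
Proof.
Open Scope R_scope.
move=> rho Hrho x.
have Hd0 := d_pos Hphi Hdphi.
have Hra : dphi < rho * alpha.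
  have -> : dphi = dphi / alpha * alpha by field; lra.
  nra.
have Hr0 : 0 < rho by nra.
have Hobj : forall y, surrogate_obj J p phi rho y = \big[Rplus/0]_(k : 'I_m)
   (rho * G J p y k - psi_star phi (rho * G J p y k)).
  by move=> y; rewrite /surrogate_obj obj_sum.
have HA : forall y, surrogate_obj J p phi rho y <= INR (l0 (G J p y)).
  move=> y; rewrite Hobj /l0; apply: sum_le_nat => k.
  case: (Req_EM_T (G J p y k) 0) => [Heq|Hne] /=.
  - rewrite Heq Rmult_0_r (ps0 Hphi) /=; lra.
  - have := ps_ge Hphi (rho * G J p y k). simpl INR. lra.
pose cnt y := (\sum_(k : 'I_m) (if Rgeb (Rabs (G J p y k)) alpha then 1 else 0))%nat.
have HB : forall y, INR (cnt y) <= surrogate_obj J p phi rho y.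
  move=> y; rewrite Hobj /cnt; apply: sum_ge_nat => k.
  have Hg := G_nonneg J p y k.
  case E: (Rgeb _ _).
  - move/RgebP: E; rewrite Rabs_pos_eq // => E.
    have := ps_big Hphi Hdphi (s := rho * G J p y k) ltac:(nra). simpl INR. lra.
  - have := ps_le Hphi (s := rho * G J p y k) ltac:(nra). simpl INR. lra.
have Hie : index_enum 'I_m = enum 'I_m by rewrite [index_enum _]unlock -enumT.
have HC : forall y, feasible f Om delta y -> (sstar <= cnt y)%nat.
  move=> y Hy; rewrite /cnt sum_ind_count Hie.
  exact: count_pi Halpha Hsstar0 (Hpi y Hy).
have HD : forall y k, G J p y k <> 0 -> G J p y k < alpha ->
    INR (cnt y) < surrogate_obj J p phi rho y.
  move=> y k0 Hne Hlt; rewrite Hobj /cnt.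
  apply: (sum_gt_nat (k0 := k0)) => //.
  - move=> k. have Hg := G_nonneg J p y k.
    case E: (Rgeb _ _).
    + move/RgebP: E; rewrite Rabs_pos_eq // => E.
      have := ps_big Hphi Hdphi (s := rho * G J p y k) ltac:(nra). simpl INR. lra.
    + have := ps_le Hphi (s := rho * G J p y k) ltac:(nra). simpl INR. lra.
  - exact: mem_index_enum.
  - have Hg := G_nonneg J p y k0.
    have -> : Rgeb (Rabs (G J p y k0)) alpha = false.
      case E: (Rgeb _ _) => //. move/RgebP: E; rewrite Rabs_pos_eq //. lra.
    have := ps_pos Hphi Hdphi (s := rho * G J p y k0).
    have : 0 < G J p y k0 by lra.
    simpl INR. move=> Hgp Hps. have := Hps ltac:(nra). lra.
have HE : forall y, (forall k, G J p y k <> 0 -> alpha <= G J p y k) ->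
    (l0 (G J p y) <= cnt y)%nat.
  move=> y H; rewrite /l0 /cnt; apply: leq_sum => k _.
  case: (Req_EM_T (G J p y k) 0) => [_|Hne] //.
  have -> // : Rgeb (Rabs (G J p y k)) alpha.
  apply/RgebP; rewrite Rabs_pos_eq; [exact: H | exact: G_nonneg].
have [x0 [[Hfx0 Hopt0] Hl0]] := Hsstar.
split.
- move=> [Hfx Hopt]; split => // y Hfy.
  have H1 := HA x. have H2 := HB y.
  have H3 : (l0 (G J p x) <= cnt y)%nat.
    apply: leq_trans (HC y Hfy). rewrite -Hl0. exact: Hopt.
  have := le_INR _ _ (ssrnat.leP H3). lra.
- move=> [Hfx Hopt]; split => // y Hfy.
  apply: leq_trans (Hopt0 y Hfy). rewrite Hl0.
  have Hox := Hopt x0 Hfx0. have := HA x0. rewrite Hl0 => Hx0.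
  case: (classic (exists k, G J p x k <> 0 /\ G J p x k < alpha)) => [[k [Hk1 Hk2]]|Hno].
  + have := HD x k Hk1 Hk2. have := le_INR _ _ (ssrnat.leP (HC x Hfx)). lra.
  + apply: leq_trans (HE x _) _.
    * move=> k Hk. apply: Rnot_lt_le => Hlt. apply: Hno. by exists k.
    * apply/ssrnat.leP; apply: INR_le. have := HB x. lra.
Qed.
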